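(* Let $\phi\colon H\to\mathrm{Out}(A_\Gamma)$ be a homomorphism and let $\Delta,\Sigma\in\mathcal L^\phi$. Then (i) $\Delta\cap\Sigma\in\mathcal L^\phi$; and (ii) if $\mathrm{lk}(\Delta\cap\Sigma)\subseteq\mathrm{st}(\Delta)$, then $\Delta\cup\Sigma\in\mathcal L^\phi$.
   Context: $\Gamma$ is a finite simplicial graph, $A_\Gamma$ its RAAG. Induced subgraphs are identified with their vertex sets, and $\cap,\cup$ of induced subgraphs means the induced subgraph on the intersection/union of vertex sets. For an induced subgraph $\Delta$, $A_\Delta$ is the subgroup generated by its vertices, $\mathrm{lk}(\Delta)=\bigcap_{v\in\Delta}\mathrm{lk}(v)$ (the vertices adjacent to all vertices of $\Delta$; $\mathrm{lk}(\emptyset)=\Gamma$) and $\mathrm{st}(\Delta)=\Delta\cup\mathrm{lk}(\Delta)$. The system of invariant subgraphs $\mathcal L^\phi$ is the set of induced subgraphs $\Delta\subseteq\Gamma$ (including the empty one) such that every element of $\phi(H)$ maps $A_\Delta$ to a conjugate of $A_\Delta$ (i.e. $\phi(H)$ preserves the conjugacy class of $A_\Delta$). *)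

(* Defs.v *)
(* Concrete model of a right-angled Artin group A_Gamma:
   elements are words in the letters v^{+1}, v^{-1} (v a vertex), modulo the
   congruence generated by free cancellation and commutation of letters whose
   underlying vertices are adjacent. *)
From mathcomp Require Import all_boot.
Set Implicit Arguments. Unset Strict Implicit. Unset Printing Implicit Defensive.

Section RAAG.
Variable V : finType.
Variable adj : rel V.   (* edge relation of Gamma (assumed symmetric, irreflexive) *)

(* a letter (v, false) is the generator v, (v, true) is v^-1 *)
Definition letter := (V * bool)%type.
Definition word := seq letter.
Definition inv_letter (x : letter) : letter := (x.1, ~~ x.2).
Definition winv (w : word) : word := rev (map inv_letter w).
Definition gen (v : V) : word := [:: (v, false)].

Inductive weq : word -> word -> Prop :=
| weq_refl w : weq w w
| weq_sym w1 w2 : weq w1 w2 -> weq w2 w1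
| weq_trans w1 w2 w3 : weq w1 w2 -> weq w2 w3 -> weq w1 w3
| weq_cancel (u v : word) (x : letter) :
    weq (u ++ x :: inv_letter x :: v) (u ++ v)
| weq_comm (u v : word) (x y : letter) :
    adj x.1 y.1 -> weq (u ++ x :: y :: v) (u ++ y :: x :: v).

Definition ext (g : V -> word) (w : word) : word :=
  flatten (map (fun x => if x.2 then winv (g x.1) else g x.1) w).

Definition is_endo (g : V -> word) : Prop :=
  forall u v, adj u v -> weq (g u ++ g v) (g v ++ g u).

Definition is_auto (g : V -> word) : Prop :=
  is_endo g /\ exists h, is_endo h /\
    forall v, weq (ext g (h v)) (gen v) /\ weq (ext h (g v)) (gen v).

Definition comp (g1 g2 : V -> word) : V -> word := fun v => ext g1 (g2 v).

Definition out_eq (g1 g2 : V -> word) : Prop :=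
  exists c : word, forall v, weq (g1 v) (winv c ++ g2 v ++ c).

Definition in_special (D : {set V}) (w : word) : Prop :=
  exists w', weq w w' /\ all (fun x : letter => x.1 \in D) w'.

Definition conjw (c w : word) : word := winv c ++ w ++ c.

Definition maps_to_conj (g : V -> word) (D : {set V}) : Prop :=
  exists c : word,
    (forall w, in_special D w -> in_special D (conjw c (ext g w))) /\
    (forall u, in_special D u -> exists w, in_special D w /\ weq (conjw c (ext g w)) u).

Definition lk (D : {set V}) : {set V} := [set v | [forall u in D, adj u v]].
Definition st (D : {set V}) : {set V} := D :|: lk D.

(* a homomorphism phi : H -> Out(A_Gamma), each phi h given by a representative
   automorphism of A_Gamma *)
Definition is_group (H : Type) (mul : H -> H -> H) (one : H) (inv : H -> H) : Prop :=
  (forall a b c, mul a (mul b c) = mul (mul a b) c) /\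
  (forall a, mul one a = a /\ mul a one = a) /\
  (forall a, mul (inv a) a = one /\ mul a (inv a) = one).

Definition is_out_hom (H : Type) (mul : H -> H -> H) (phi : H -> V -> word) : Prop :=
  (forall h, is_auto (phi h)) /\
  (forall h1 h2, out_eq (phi (mul h1 h2)) (comp (phi h1) (phi h2))).

Definition invariant_sub (H : Type) (phi : H -> V -> word) (D : {set V}) : Prop :=
  forall h, maps_to_conj (phi h) D.

End RAAG.

(* Main.v *)
From Stdlib Require Import Setoid Morphisms ZArith Lia ClassicalEpsilon PropExtensionality FunctionalExtensionality Classical.
Require Import Defs.
From mathcomp Require Import all_boot.
Set Implicit Arguments. Unset Strict Implicit. Unset Printing Implicit Defensive.

Section Basic.
Variable V : finType.
Variable adj : rel V.
Hypothesis adj_sym : symmetric adj.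
Hypothesis adj_irr : irreflexive adj.

Local Notation weq := (weq adj).
Local Notation word := (word V).

Global Instance weq_equiv : Equivalence weq.
Proof. split; [exact: weq_refl | exact: weq_sym | exact: weq_trans]. Qed.

Lemma weq_catl (a b b' : word) : weq b b' -> weq (a ++ b) (a ++ b').
Proof.
elim=> {b b'}.
- by move=> w; reflexivity.
- by move=> ? ? _ H; symmetry.
- by move=> ? ? ? _ H1 _ H2; etransitivity; eauto.
- by move=> u v x; rewrite !catA; apply: weq_cancel.
- by move=> u v x y H; rewrite !catA; apply: weq_comm.
Qed.

Lemma weq_catr (a a' b : word) : weq a a' -> weq (a ++ b) (a' ++ b).
Proof.
elim=> {a a'}.
- by move=> w; reflexivity.
- by move=> ? ? _ H; symmetry.
- by move=> ? ? ? _ H1 _ H2; etransitivity; eauto.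
- by move=> u v x; rewrite -!catA !cat_cons; apply: weq_cancel.
- by move=> u v x y H; rewrite -!catA !cat_cons; apply: weq_comm.
Qed.

Global Instance cat_proper : Proper (weq ==> weq ==> weq) (@cat (letter V)).
Proof.
move=> a a' Ha b b' Hb; transitivity (a ++ b'); [exact: weq_catl | exact: weq_catr].
Qed.

Global Instance cons_proper x : Proper (weq ==> weq) (cons x).
Proof. by move=> a b H; rewrite -(cat1s x a) -(cat1s x b); apply: weq_catl. Qed.

Lemma inv_letterK (x : letter V) : inv_letter (inv_letter x) = x.
Proof. by case: x => v b; rewrite /inv_letter /= negbK. Qed.

Lemma winv_cat (a b : word) : winv (a ++ b) = winv b ++ winv a.
Proof. by rewrite /winv map_cat rev_cat. Qed.

Lemma winvK (a : word) : winv (winv a) = a.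
Proof. by rewrite /winv map_rev revK -map_comp map_id_in // => x _ /=; rewrite inv_letterK. Qed.

Lemma winv_cons x (a : word) : winv (x :: a) = winv a ++ [:: inv_letter x].
Proof. by rewrite -cat1s winv_cat. Qed.

Lemma winv_nil : winv ([::] : word) = [::].
Proof. by []. Qed.

Global Instance winv_proper : Proper (weq ==> weq) (@winv V).
Proof.
move=> a b; elim=> {a b}.
- by move=> w; reflexivity.
- by move=> ? ? _ H; symmetry.
- by move=> ? ? ? _ H1 _ H2; etransitivity; eauto.
- move=> u v x; rewrite !winv_cat !winv_cons -!catA /=.
  by rewrite inv_letterK; apply: weq_cancel.
- move=> u v x y H; rewrite !winv_cat !winv_cons -!catA /=.
  by apply: weq_comm; rewrite /inv_letter /= adj_sym.
Qed.

Lemma cancelR (a : word) : weq (a ++ winv a) [::].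
Proof.
elim: a => [|x a IH] //=; first by reflexivity.
rewrite winv_cons /= catA IH /=.
exact: (weq_cancel adj [::] [::] x).
Qed.

Lemma cancelL (a : word) : weq (winv a ++ a) [::].
Proof. by rewrite -{2}(winvK a); apply: cancelR. Qed.

Lemma group_cancel_r (a b : word) : weq (a ++ b ++ winv b) a.
Proof. by rewrite cancelR cats0; reflexivity. Qed.
Lemma group_cancel_l (a b : word) : weq (winv b ++ b ++ a) a.
Proof. by rewrite catA cancelL; reflexivity. Qed.
Lemma group_cancel_r' (a b : word) : weq (a ++ winv b ++ b) a.
Proof. by rewrite cancelL cats0; reflexivity. Qed.
Lemma group_cancel_l' (a b : word) : weq (b ++ winv b ++ a) a.
Proof. by rewrite catA cancelR; reflexivity. Qed.

End Basic.

Section Retract.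
Variable V : finType.
Variable adj : rel V.
Hypothesis adj_sym : symmetric adj.
Hypothesis adj_irr : irreflexive adj.

Local Notation weq := (weq adj).
Local Notation word := (word V).
Local Notation in_special := (in_special adj).
Local Instance winv_proper_0 : Proper (weq ==> weq) (@winv V) := winv_proper adj_sym.

Definition rho (X : {set V}) (w : word) : word := filter (fun x : letter V => x.1 \in X) w.

Lemma rho_cat (X : {set V}) (a b : word) : rho X (a ++ b) = rho X a ++ rho X b.
Proof. exact: filter_cat. Qed.

Lemma rho_winv (X : {set V}) (a : word) : rho X (winv a) = winv (rho X a).
Proof.
by rewrite /rho /winv filter_rev filter_map.
Qed.

Global Instance rho_proper X : Proper (weq ==> weq) (rho X).
Proof.
move=> a b; elim=> {a b}.
- by move=> w; reflexivity.
- by move=> ? ? _ H; symmetry.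
- by move=> ? ? ? _ H1 _ H2; etransitivity; eauto.
- move=> u v x; rewrite !rho_cat /=.
  by case Hx: (x.1 \in X); [apply: weq_cancel | reflexivity].
- move=> u v x y H; rewrite !rho_cat /=.
  case Hx: (x.1 \in X); case Hy: (y.1 \in X); try reflexivity.
  exact: weq_comm.
Qed.

Lemma rho_rho (X Y : {set V}) (w : word) : rho X (rho Y w) = rho (X :&: Y) w.
Proof.
rewrite /rho -filter_predI; apply: eq_filter => x /=.
by rewrite in_setI.
Qed.

Lemma rho_id (X : {set V}) (w : word) : all (fun x : letter V => x.1 \in X) w -> rho X w = w.
Proof. by move=> H; rewrite /rho; apply/all_filterP. Qed.

Lemma rho_all (X : {set V}) (w : word) : all (fun x : letter V => x.1 \in X) (rho X w).
Proof. by apply/allP => x; rewrite mem_filter => /andP[]. Qed.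

Lemma in_specialE (X : {set V}) (w : word) : in_special X w <-> weq w (rho X w).
Proof.
split.
- case=> w' [Hw Hall]. rewrite Hw. rewrite rho_id //; reflexivity.
- move=> H; exists (rho X w); split => //; exact: rho_all.
Qed.

Global Instance in_special_proper X : Proper (weq ==> iff) (in_special X).
Proof.
move=> a b H; rewrite !in_specialE; split=> H'.
- transitivity a; first by symmetry.
  transitivity (rho X a) => //; exact: rho_proper.
- transitivity b => //; transitivity (rho X b) => //.
  apply: rho_proper; by symmetry.
Qed.

Lemma in_special_nil (X : {set V}) : in_special X [::].
Proof. by exists [::]; split => //; reflexivity. Qed.

Lemma in_special_cat (X : {set V}) (a b : word) : in_special X a -> in_special X b -> in_special X (a ++ b).
Proof.
rewrite !in_specialE rho_cat => Ha Hb; rewrite {1}Ha {1}Hb; reflexivity.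
Qed.

Lemma in_special_winv (X : {set V}) (a : word) : in_special X a -> in_special X (winv a).
Proof. rewrite !in_specialE rho_winv => Ha; rewrite {1}Ha; reflexivity. Qed.

Lemma in_special_letter (X : {set V}) (x : letter V) : x.1 \in X -> in_special X [:: x].
Proof. by move=> H; exists [:: x]; split; [reflexivity| rewrite /= H]. Qed.

Lemma in_special_sub (X Y : {set V}) (w : word) : X \subset Y -> in_special X w -> in_special Y w.
Proof.
move=> sXY [w' [Hw Hall]]; exists w'; split => //.
apply/allP => x /(allP Hall); exact: (subsetP sXY).
Qed.

Lemma in_specialT (w : word) : in_special setT w.
Proof. by exists w; split; [reflexivity| apply/allP => x; rewrite in_setT]. Qed.

Lemma in_specialI (X Y : {set V}) (w : word) : in_special X w -> in_special Y w -> in_special (X :&: Y) w.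
Proof.
rewrite !in_specialE -rho_rho => HX HY.
by rewrite {1}HX {1}HY; reflexivity.
Qed.

Lemma rho_special (X : {set V}) (w : word) : in_special X (rho X w).
Proof. rewrite in_specialE /rho filter_id; reflexivity. Qed.

Definition expo (p : V) (w : word) : Z :=
  foldr (fun x z => if x.1 == p then (if x.2 then z - 1 else z + 1)%Z else z) 0%Z w.

Lemma expo_cat p (a b : word) : expo p (a ++ b) = (expo p a + expo p b)%Z.
Proof.
elim: a => [|[v0 bb] a IH] //=; rewrite IH.
by case: (v0 == p); case: bb => /=; lia.
Qed.

Lemma expo_winv p (a : word) : expo p (winv a) = (- expo p a)%Z.
Proof.
elim: a => [|[v0 b] a IH] //=; rewrite winv_cons expo_cat IH /=.
by case: (v0 == p); case: b => /=; lia.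
Qed.

Lemma expo_weq p (a b : word) : weq a b -> expo p a = expo p b.
Proof.
elim=> {a b} //.
- by move=> ? ? ? _ -> _ ->.
- move=> u v [v0 b]; rewrite !expo_cat /=.
  by case: (v0 == p); case: b => /=; lia.
- move=> u v [x1 x2] [y1 y2] _; rewrite !expo_cat /=.
  by case: (x1 == p); case: (y1 == p); case: x2; case: y2; lia.
Qed.

Lemma expo_none p (a : word) : all (fun x : letter V => x.1 != p) a -> expo p a = 0%Z.
Proof.
elim: a => [|x a IH] //= /andP[Hx Ha]; rewrite IH // (negbTE Hx) //.
Qed.

Lemma expo_special p (X : {set V}) (a : word) : p \notin X -> in_special X a -> expo p a = 0%Z.
Proof.
move=> Hp [w [Hw Hall]]; rewrite (expo_weq p Hw) expo_none //.
apply/allP => x /(allP Hall) Hx; apply/eqP => E; by rewrite -E Hx in Hp.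
Qed.

Lemma comm_words (a b : word) :
  (forall x y, x \in a -> y \in b -> adj x.1 y.1) -> weq (a ++ b) (b ++ a).
Proof.
elim: a => [|x a IH] H /=; first by rewrite cats0; reflexivity.
have H1 : weq (x :: b) (b ++ [:: x]).
  have Hx : forall y, y \in b -> adj x.1 y.1 by move=> y Hy; apply: H => //; rewrite inE eqxx.
  elim: b Hx {H IH} => [|y b IHb] Hx /=; first by reflexivity.
  transitivity (y :: x :: b).
    have := (@weq_comm V adj [::] b x y); apply; apply: Hx; rewrite inE eqxx //.
  apply: cons_proper; apply: IHb => z Hz; apply: Hx; rewrite inE Hz orbT //.
rewrite IH; last by move=> x' y Hx' Hy; apply: H => //; rewrite inE Hx' orbT.
by rewrite -cat_cons H1 -catA; reflexivity.
Qed.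

End Retract.

Section HNN.
Variable V : finType.
Variable adj : rel V.
Hypothesis adj_sym : symmetric adj.
Hypothesis adj_irr : irreflexive adj.
Variable u : V.

Local Notation weq := (weq adj).
Local Notation word := (word V).
Local Notation in_special := (in_special adj).
Local Instance winv_proper_1 : Proper (weq ==> weq) (@winv V) := winv_proper adj_sym.

Definition Lset := [set v | adj u v].
Definition Gset := [set v | v != u].

Lemma LsubG : Lset \subset Gset.
Proof. apply/subsetP => v; rewrite !inE => H; apply/eqP => E; by rewrite E adj_irr in H. Qed.

Definition cls (w : word) : word := epsilon (inhabits [::]) (fun w' => weq w w').

Lemma cls_weq w : weq (cls w) w.
Proof.
symmetry; apply: (epsilon_spec (inhabits [::]) (fun w' => weq w w')).
by exists w; reflexivity.
Qed.

Lemma cls_eq w1 w2 : weq w1 w2 -> cls w1 = cls w2.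
Proof.
move=> H; rewrite /cls; f_equal; apply: functional_extensionality => w'.
apply: propositional_extensionality; split=> H'.
- by transitivity w1 => //; symmetry.
- by transitivity w2.
Qed.

Lemma cls_cls w : cls (cls w) = cls w.
Proof. exact: cls_eq (cls_weq w). Qed.

Definition Kc (w t : word) : Prop :=
  (exists l, in_special Lset l /\ weq w (t ++ l)) /\ (in_special Lset w -> t = [::]).

Definition tr (w : word) : word := epsilon (inhabits [::]) (Kc w).

Lemma tr_spec w : Kc w (tr w).
Proof.
apply: (epsilon_spec (inhabits [::]) (Kc w)).
case: (classic (in_special Lset w)) => HL.
- exists [::]; split => //; exists w; split => //; reflexivity.
- exists w; split => //; exists [::]; split; [exact: in_special_nil| rewrite cats0; reflexivity].
Qed.

Lemma tr_T1 w : exists l, in_special Lset l /\ weq w (tr w ++ l).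
Proof. by case: (tr_spec w). Qed.

Lemma tr_T2 w : in_special Lset w -> tr w = [::].
Proof. by case: (tr_spec w). Qed.

Lemma tr_T3 w : tr w = [::] -> in_special Lset w.
Proof. by case: (tr_T1 w) => l [Hl Hw] E; rewrite Hw E. Qed.

Lemma tr_T4 w w' l : in_special Lset l -> weq w' (w ++ l) -> tr w' = tr w.
Proof.
move=> Hl Hw; rewrite /tr; f_equal; apply: functional_extensionality => t.
apply: propositional_extensionality.
have HLw : in_special Lset w' <-> in_special Lset w.
  split => H.
  - have -> : weq w (w' ++ winv l) by rewrite Hw -catA cancelR cats0; reflexivity.
    by apply: in_special_cat => //; apply: in_special_winv.
  - by rewrite Hw; apply: in_special_cat.
rewrite /Kc; split => [[[l0 [Hl0 H0]] H1]|[[l0 [Hl0 H0]] H1]]; split.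
- exists (l0 ++ winv l); split; first by apply: in_special_cat => //; apply: in_special_winv.
  by rewrite catA -H0 Hw -catA cancelR cats0; reflexivity.
- by move=> H; apply: H1; apply/HLw.
- exists (l0 ++ l); split; first by apply: in_special_cat.
  by rewrite Hw H0 catA; reflexivity.
- by move=> H; apply: H1; apply/HLw.
Qed.

Lemma tr_T5 w w' : weq w' w -> tr w' = tr w.
Proof. move=> H; apply: (tr_T4 (l := [::])); [exact: in_special_nil| by rewrite cats0]. Qed.

Lemma tr_tr w : tr (tr w) = tr w.
Proof.
case: (tr_T1 w) => l [Hl Hw]; apply: (tr_T4 (l := winv l)); first exact: in_special_winv.
transitivity ((tr w ++ l) ++ winv l); first by rewrite -catA cancelR cats0; reflexivity.
by apply: weq_catr; symmetry.
Qed.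

Lemma tr_nil : tr [::] = [::].
Proof. apply: tr_T2; exact: in_special_nil. Qed.

Lemma tr_L_nonnil l t : in_special Lset l -> tr t = t -> t <> [::] -> tr (l ++ t) <> [::].
Proof.
move=> Hl Ht Hn E; apply: Hn; rewrite -Ht; apply: tr_T2.
move/tr_T3: E => E.
have -> : weq t (winv l ++ (l ++ t)) by rewrite catA cancelL; reflexivity.
by apply: in_special_cat => //; apply: in_special_winv.
Qed.

Lemma L_comm_u l b : in_special Lset l -> weq (l ++ [:: (u, b)]) ((u, b) :: l).
Proof.
move=> Hl; rewrite in_specialE in Hl; rewrite Hl.
rewrite -cat1s; apply: comm_words => x y Hx; rewrite inE => /eqP -> /=.
move: Hx; rewrite /rho mem_filter inE => /andP[H _]; by rewrite adj_sym.
Qed.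

Definition delta (b : bool) : Z := if b then (-1)%Z else 1%Z.

Definition upow (k : Z) : word :=
  match k with
  | Z0 => [::]
  | Zpos p => nseq (Pos.to_nat p) (u, false)
  | Zneg p => nseq (Pos.to_nat p) (u, true)
  end.

Lemma L_comm_upow l k : in_special Lset l -> weq (l ++ upow k) (upow k ++ l).
Proof.
move=> Hl.
have H : forall n b, weq (l ++ nseq n (u, b)) (nseq n (u, b) ++ l).
  elim=> [|n IH] b /=; first by rewrite cats0; reflexivity.
  rewrite -cat1s catA L_comm_u // -cat1s -catA IH catA; reflexivity.
by case: k => [|p|p] /=; [rewrite cats0; reflexivity| apply: H| apply: H].
Qed.

Lemma upow_pos n : upow (Z.of_nat n) = nseq n (u, false).
Proof. case: n => //= n; by rewrite SuccNat2Pos.id_succ. Qed.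

Lemma upow_neg n : upow (- Z.of_nat n) = nseq n (u, true).
Proof. case: n => //= n; by rewrite SuccNat2Pos.id_succ. Qed.

Lemma upow_step b k : weq (upow (k + delta b)) ((u, b) :: upow k).
Proof.
have [n [->|->]] : exists n, k = Z.of_nat n \/ k = (- Z.of_nat n)%Z.
  exists (Z.to_nat (Z.abs k)); lia.
- case: b => /=.
  + case: n => [|n]; first by reflexivity.
    have -> : (Z.of_nat n.+1 + -1 = Z.of_nat n)%Z by lia.
    rewrite !upow_pos /=.
    symmetry; exact: (@weq_cancel V adj [::] _ (u, true)).
  + have -> : (Z.of_nat n + 1 = Z.of_nat n.+1)%Z by lia.
    rewrite !upow_pos; reflexivity.
- case: b => /=.
  + have -> : (- Z.of_nat n + -1 = - Z.of_nat n.+1)%Z by lia.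
    rewrite !upow_neg; reflexivity.
  + case: n => [|n]; first by reflexivity.
    have -> : (- Z.of_nat n.+1 + 1 = - Z.of_nat n)%Z by lia.
    rewrite !upow_neg /=.
    symmetry; exact: (@weq_cancel V adj [::] _ (u, false)).
Qed.


Definition state := (seq (word * Z) * word)%type.

Fixpoint actG (h : word) (ss : seq (word * Z)) (g : word) : state :=
  match ss with
  | [::] => ([::], cls (h ++ g))
  | tk :: rest =>
      let t' := tr (h ++ tk.1) in
      let r := actG (winv t' ++ h ++ tk.1) rest g in
      ((t', tk.2) :: r.1, r.2)
  end.

Definition actU (b : bool) (s : state) : state :=
  match s.1 with
  | [::] => ([:: ([::], delta b)], s.2)
  | tk :: rest =>
      if tk.1 == [::] then
        (if (tk.2 + delta b =? 0)%Z then (rest, s.2) else (([::], (tk.2 + delta b)%Z) :: rest, s.2))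
      else (([::], delta b) :: tk :: rest, s.2)
  end.

Definition act (x : letter V) (s : state) : state :=
  if x.1 == u then actU x.2 s else actG [:: x] s.1 s.2.

Definition actw (w : word) (s : state) : state := foldr act s w.

Fixpoint valid_tail (ss : seq (word * Z)) : Prop :=
  match ss with
  | [::] => True
  | tk :: r => (tr tk.1 = tk.1 /\ tk.2 <> 0%Z /\ tk.1 <> [::]) /\ valid_tail r
  end.

Definition valid (s : state) : Prop :=
  cls s.2 = s.2 /\ in_special Gset s.2 /\
  match s.1 with
  | [::] => True
  | tk :: rest => tr tk.1 = tk.1 /\ tk.2 <> 0%Z /\ valid_tail rest
  end.

Lemma actG_resp h h' ss g : weq h h' -> actG h ss g = actG h' ss g.
Proof.
elim: ss h h' => [|[t k] ss IH] h h' H /=.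
- by rewrite (cls_eq (weq_catr g H)).
- have E : tr (h ++ t) = tr (h' ++ t) by apply: tr_T5; apply: weq_catr.
  rewrite E (IH _ (winv (tr (h' ++ t)) ++ h' ++ t)) //.
  by apply: weq_catl; apply: weq_catr.
Qed.

Lemma actG_comp h1 h2 ss g :
  actG h1 (actG h2 ss g).1 (actG h2 ss g).2 = actG (h1 ++ h2) ss g.
Proof.
elim: ss h1 h2 => [|[t k] ss IH] h1 h2 /=.
- by congr (_, _); apply: cls_eq; rewrite cls_weq catA; reflexivity.
- have E : tr (h1 ++ tr (h2 ++ t)) = tr ((h1 ++ h2) ++ t).
    case: (tr_T1 (h2 ++ t)) => l [Hl Hw].
    symmetry; apply: (tr_T4 (l := l)) => //.
    by rewrite -!catA; apply: weq_catl.
  rewrite IH E.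
  set T := tr ((h1 ++ h2) ++ t).
  have E2 : actG ((winv T ++ h1 ++ tr (h2 ++ t)) ++ winv (tr (h2 ++ t)) ++ h2 ++ t) ss g =
            actG (winv T ++ (h1 ++ h2) ++ t) ss g.
    apply: actG_resp; rewrite -!catA group_cancel_l'; reflexivity.
  by rewrite E2.
Qed.


Lemma recword_L h t : in_special Lset (winv (tr (h ++ t)) ++ h ++ t).
Proof.
case: (tr_T1 (h ++ t)) => l [Hl Hw].
by rewrite {2}Hw group_cancel_l.
Qed.

Fixpoint allfix (ss : seq (word * Z)) : Prop :=
  match ss with [::] => True | tk :: r => tr tk.1 = tk.1 /\ allfix r end.

Lemma valid_tail_allfix ss : valid_tail ss -> allfix ss.
Proof. by elim: ss => [|tk ss IH] //= [[H _] /IH]. Qed.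

Lemma valid_allfix s : valid s -> allfix s.1 /\ cls s.2 = s.2.
Proof.
case: s => [[|tk ss] g] [Hc [_ H]] //=; split => //.
by case: H => H1 [_ H2]; split => //; apply: valid_tail_allfix.
Qed.

Lemma actG_id h ss g : allfix ss -> cls g = g -> weq h [::] -> actG h ss g = (ss, g).
Proof.
elim: ss h => [|[t k] ss IH] h /=.
- by move=> _ Hg Hh; rewrite (cls_eq (weq_catr g Hh)) /= Hg.
- move=> [Ht Hss] Hg Hh.
  have E : tr (h ++ t) = t by rewrite -{2}Ht; apply: tr_T5; rewrite Hh; reflexivity.
  rewrite E IH //; rewrite Hh /=; exact: cancelL.
Qed.

Lemma actG_g h ss g : in_special Gset h -> in_special Gset g ->
  in_special Gset (actG h ss g).2 /\ cls (actG h ss g).2 = (actG h ss g).2.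
Proof.
elim: ss h => [|[t k] ss IH] h Hh Hg /=.
- split; last exact: cls_cls.
  by rewrite cls_weq; apply: in_special_cat.
- apply: IH => //; apply: (in_special_sub LsubG); exact: recword_L.
Qed.

Lemma actG_tail l ss g : in_special Lset l -> valid_tail ss -> valid_tail (actG l ss g).1.
Proof.
elim: ss l => [|[t k] ss IH] l Hl //= [[Ht [Hk Hn]] Hss]; split.
- split; first exact: tr_tr. split => //; exact: tr_L_nonnil.
- apply: IH => //; exact: recword_L.
Qed.

Lemma actG_valid h s : in_special Gset h -> valid s -> valid (actG h s.1 s.2).
Proof.
case: s => ss g Hh [Hc [HG H]] /=.
have [HG' Hc'] := actG_g ss Hh HG.
split => //; split => //.
destruct ss as [|[t k] ss] => //=; case: H => Ht [Hk Hss] /=; split; first exact: tr_tr.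
split => //; apply: actG_tail => //; exact: recword_L.
Qed.

Lemma delta_neq0 b : delta b <> 0%Z.
Proof. by case: b. Qed.

Lemma actU_valid b s : valid s -> valid (actU b s).
Proof.
case: s => [[|[t k] ss] g] [/= Hc [HG H]]; rewrite /actU /=.
- by do 2 split => //; split; [exact: tr_nil| split => //; exact: delta_neq0].
- case: H => /= Ht [Hk Hss].
  case: eqP => Et /=.
  + case: Z.eqb_spec => Ek.
    * do 2 split => //. destruct ss as [|[t2 k2] ss] => //=.
      by case: Hss => [[? [? ?]] ?].
    * by do 2 split => //; split; [exact: tr_nil|].
  + do 2 split => //; split; first exact: tr_nil.
    split; first exact: delta_neq0.
    by split.
Qed.

Lemma actU_cancel b s : valid s -> actU b (actU (~~ b) s) = s.
Proof.
have Hd : (delta (~~ b) + delta b = 0)%Z by case: b.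
case: s => [[|[t k] ss] g] [/= Hc [HG H]]; rewrite /actU /=.
- by rewrite Hd.
- case: H => /= Ht [Hk Hss].
  case: eqP => Et /=.
  + subst t. case: Z.eqb_spec => Ek /=.
    * destruct ss as [|[t2 k2] ss] => /=.
      - by do 3 f_equal; lia.
      - case: Hss => [[_ [_ Hn]] _]; case: eqP => // _; do 3 f_equal; lia.
    * try rewrite eqxx; case: Z.eqb_spec => E2; first lia.
      by do 3 f_equal; lia.
  + try rewrite eqxx; case: Z.eqb_spec => E2 //; lia.
Qed.

Lemma actU_L_comm b l s : in_special Lset l -> valid s ->
  actU b (actG l s.1 s.2) = actG l (actU b s).1 (actU b s).2.
Proof.
move=> Hl.
have E0 : tr (l ++ [::]) = [::] by rewrite cats0; exact: tr_T2.
have E1 : forall ss g, actG (winv [::] ++ l ++ [::]) ss g = actG l ss g.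
  by move=> ss g; apply: actG_resp; rewrite /= cats0; reflexivity.
case: s => [[|[t k] ss] g] [/= Hc [HG H]]; rewrite /actU /=.
- rewrite E0; congr (_, _); apply: cls_eq; rewrite /= cats0; reflexivity.
- case: H => /= Ht [Hk Hss].
  case: (eqVneq t [::]) => Et.
  + subst t; rewrite E0 eqxx /= E1.
    case: Z.eqb_spec => Ek /=; first by case: (actG l ss g).
    by rewrite E0 E1.
  + have Hn : tr (l ++ t) != [::] by apply/eqP; apply: tr_L_nonnil => //; apply/eqP.
    by rewrite (negbTE Hn) /= E0 winv_nil /= cats0.
Qed.


Lemma letterG (x : letter V) : x.1 != u -> in_special Gset [:: x].
Proof. by move=> H; apply: in_special_letter; rewrite inE. Qed.

Lemma act_valid x s : valid s -> valid (act x s).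
Proof.
rewrite /act; case: eqP => H Hs; first exact: actU_valid.
apply: actG_valid => //; apply: letterG; exact/eqP.
Qed.

Lemma actw_valid w s : valid s -> valid (actw w s).
Proof. elim: w => [|x w IH] //= Hs; apply: act_valid; exact: IH. Qed.

Lemma actw_cat a b s : actw (a ++ b) s = actw a (actw b s).
Proof. exact: foldr_cat. Qed.

Lemma act_cancel x s : valid s -> act x (act (inv_letter x) s) = s.
Proof.
move=> Hs; case: x => v b; rewrite /act /=.
case: eqP => H.
- exact: actU_cancel.
- rewrite actG_comp; case: (valid_allfix Hs) => H1 H2.
  rewrite actG_id //; first by case: s {Hs H1 H2}.
  exact: (@weq_cancel V adj [::] [::] (v, b)).
Qed.

Lemma act_comm x y s : adj x.1 y.1 -> valid s -> act x (act y s) = act y (act x s).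
Proof.
move=> Hxy Hs; rewrite /act.
case: eqP => Hx; case: eqP => Hy.
- by move: Hxy; rewrite Hx Hy adj_irr.
- apply: actU_L_comm => //; apply: in_special_letter; rewrite inE -Hx //.
- symmetry; apply: actU_L_comm => //; apply: in_special_letter; rewrite inE -Hy adj_sym //.
- rewrite !actG_comp; apply: actG_resp.
  exact: (@weq_comm V adj [::] [::] x y).
Qed.

Lemma actw_resp w1 w2 : weq w1 w2 -> forall s, valid s -> actw w1 s = actw w2 s.
Proof.
elim=> {w1 w2}.
- by [].
- by move=> ? ? _ H s Hs; symmetry; apply: H.
- by move=> ? ? ? _ H1 _ H2 s Hs; rewrite H1 // H2.
- move=> a b x s Hs; rewrite !actw_cat /=; congr actw.
  apply: act_cancel; exact: actw_valid.
- move=> a b x y Hxy s Hs; rewrite !actw_cat /=; congr actw.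
  apply: act_comm => //; exact: actw_valid.
Qed.


Definition Rm (k : word) (s : state) : state := (s.1, cls (s.2 ++ k)).

Lemma actG_R h ss g k :
  actG h ss (cls (g ++ k)) = ((actG h ss g).1, cls ((actG h ss g).2 ++ k)).
Proof.
elim: ss h => [|[t kk] ss IH] h /=.
- congr (_, _); apply: cls_eq; rewrite !cls_weq catA; reflexivity.
- by rewrite IH.
Qed.

Lemma actU_split b ss g : actU b (ss, g) = ((actU b (ss, [::])).1, g).
Proof.
rewrite /actU /=; case: ss => [|[t k] ss] //=.
by case: eqP => _ //; case: Z.eqb.
Qed.

Lemma act_R x k s : act x (Rm k s) = Rm k (act x s).
Proof.
rewrite /act /Rm; case: eqP => _.
- by case: s => ss g /=; rewrite actU_split [actU x.2 (ss, g)]actU_split.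
- by rewrite actG_R.
Qed.

Lemma actw_R w k s : actw w (Rm k s) = Rm k (actw w s).
Proof. by elim: w => [|x w IH] //=; rewrite IH act_R. Qed.

Definition interp (s : state) : word :=
  flatten (map (fun tk => tk.1 ++ upow tk.2) s.1) ++ s.2.

Lemma interp_cons t k ss g : interp ((t, k) :: ss, g) = t ++ upow k ++ interp (ss, g).
Proof. by rewrite /interp /= -!catA. Qed.

Lemma interp_actG h ss g : weq (interp (actG h ss g)) (h ++ interp (ss, g)).
Proof.
elim: ss h => [|[t k] ss IH] h.
- by rewrite /interp /= cls_weq; reflexivity.
- have -> : actG h ((t, k) :: ss) g =
    ((tr (h ++ t), k) :: (actG (winv (tr (h ++ t)) ++ h ++ t) ss g).1,
     (actG (winv (tr (h ++ t)) ++ h ++ t) ss g).2) by [].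
  rewrite interp_cons.
  have -> : ((actG (winv (tr (h ++ t)) ++ h ++ t) ss g).1,
     (actG (winv (tr (h ++ t)) ++ h ++ t) ss g).2) = actG (winv (tr (h ++ t)) ++ h ++ t) ss g
    by case: (actG _ ss g).
  rewrite IH interp_cons.
  rewrite [upow k ++ _]catA -(L_comm_upow _ (recword_L h t)) -!catA.
  rewrite group_cancel_l'; reflexivity.
Qed.

Lemma interp_actU b s : weq (interp (actU b s)) ((u, b) :: interp s).
Proof.
case: s => [[|[t k] ss] g]; rewrite /actU /=.
- rewrite /interp /= cats0; case: b; reflexivity.
- case: eqP => Et.
  + subst t; case: Z.eqb_spec => Ek.
    * rewrite interp_cons /= catA.
      have H := upow_step b k; rewrite Ek /= in H.
      rewrite -catA -cat_cons -H; reflexivity.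
    * rewrite /interp /= -!catA (upow_step b k); reflexivity.
  + rewrite /interp /= -!catA; case: b; reflexivity.
Qed.

Lemma interp_act x s : weq (interp (act x s)) (x :: interp s).
Proof.
rewrite /act; case: eqP => Hx.
- by rewrite interp_actU; case: x Hx => v b /= ->; reflexivity.
- by rewrite interp_actG; case: s; reflexivity.
Qed.

Lemma interp_actw w s : weq (interp (actw w s)) (w ++ interp s).
Proof.
elim: w => [|x w IH] /=; first reflexivity.
by rewrite interp_act IH; reflexivity.
Qed.


Lemma centralizer_u p m : p != u -> ~~ adj u p ->
  weq (m ++ [:: (p, false)]) ((p, false) :: m) -> in_special Gset m.
Proof.
move=> Hpu Hadj Hc.
set s0 : state := ([::], cls [::]).
have Hs0 : valid s0.
  split; first exact: cls_cls.
  split => //; rewrite /= cls_weq; exact: in_special_nil.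
have Hsig := actw_valid m Hs0.
have E := actw_resp Hc Hs0.
rewrite actw_cat /= /act /= (negbTE Hpu) in E.
have E2 : (([::], cls ((p, false) :: cls [::])) : state) = Rm [:: (p, false)] s0.
  rewrite /Rm /=; congr (_, _); apply: cls_eq; rewrite !cls_weq; reflexivity.
rewrite E2 actw_R in E.
case Hs: (actw m s0) E Hsig => [ss g] E Hsig.
case: ss Hs E Hsig => [|[t k] ss] Hs E Hsig.
- have H1 := interp_actw m s0; rewrite Hs /interp /= cls_weq cats0 in H1.
  rewrite -H1; by case: Hsig => _ [].
- exfalso. rewrite /Rm /= in E; case: E => Et _ _.
  case: (tr_T1 ([:: (p, false)] ++ t)) => l [Hl Hw].
  have Et' : tr ([:: (p, false)] ++ t) = t by exact: (esym Et).
  rewrite Et' in Hw.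
  have := expo_weq p Hw; rewrite !expo_cat (@expo_special V adj p Lset l) //=.
  + rewrite eqxx; lia.
  + by rewrite inE.
Qed.

End HNN.

Section Main.
Variable V : finType.
Variable adj : rel V.
Hypothesis adj_sym : symmetric adj.
Hypothesis adj_irr : irreflexive adj.

Local Notation weq := (weq adj).
Local Notation word := (word V).
Local Notation in_special := (in_special adj).
Local Instance winv_proper_2 : Proper (weq ==> weq) (@winv V) := winv_proper adj_sym.

Lemma combine (Z : {set V}) (w : word) :
  (forall u, u \notin Z -> in_special [set v | v != u] w) -> in_special Z w.
Proof.
move=> H.
have key : forall s : seq V, (forall u, u \in s -> in_special [set v | v != u] w) ->
    in_special [set v | v \notin s] w.
  elim=> [|a s IH] Hs.
  - apply: (in_special_sub (X := setT)); last exact: in_specialT.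
    by apply/subsetP => v _; rewrite inE.
  - have -> : [set v | v \notin a :: s] = [set v | v != a] :&: [set v | v \notin s].
      by apply/setP => v; rewrite !inE negb_or.
    apply: in_specialI; first by apply: Hs; rewrite inE eqxx.
    by apply: IH => u' Hu'; apply: Hs; rewrite inE Hu' orbT.
have -> : Z = [set v | v \notin enum (~: Z)].
  by apply/setP => v; rewrite !inE mem_enum inE negbK.
apply: key => u'; rewrite mem_enum inE; exact: H.
Qed.

Lemma cent_st (P : {set V}) (n : word) :
  (forall p, p \in P -> weq (n ++ [:: (p, false)]) ((p, false) :: n)) ->
  in_special (st adj P) n.
Proof.
move=> H; apply: combine => u Hu.
have HuP : u \notin P by move: Hu; rewrite /st inE negb_or => /andP[].
have : u \notin lk adj P by move: Hu; rewrite /st inE negb_or => /andP[].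
rewrite /lk inE negb_forall => /existsP[p]; rewrite negb_imply => /andP[Hp Ha].
have Hpu : p != u by apply/eqP => E; rewrite -E Hp in HuP.
have := @centralizer_u V adj adj_sym adj_irr u p n Hpu.
rewrite adj_sym => /(_ Ha (H p Hp)).
by rewrite /Gset.
Qed.

Lemma st_split (D : {set V}) (n : word) :
  in_special (st adj D) n -> weq n (rho D n ++ rho (lk adj D) n).
Proof.
rewrite in_specialE => Hn.
have claim : forall w : word, all (fun x : letter V => x.1 \in st adj D) w ->
    weq w (rho D w ++ rho (lk adj D) w).
  elim=> [|x w IH] /=; first by reflexivity.
  move=> /andP[Hx Hw]; rewrite {1}(IH Hw) /rho /=.
  case HD: (x.1 \in D).
  - have HL : (x.1 \in lk adj D) = false.
      apply/negP; rewrite /lk inE => /forallP/(_ x.1); rewrite HD /=.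
      by rewrite adj_irr.
    by rewrite HL; reflexivity.
  - have HL : x.1 \in lk adj D by move: Hx; rewrite /st inE HD.
    rewrite HL.
    change (weq (([:: x] ++ filter (fun x0 : letter V => x0.1 \in D) w) ++ filter (fun x0 : letter V => x0.1 \in lk adj D) w) (filter (fun x0 : letter V => x0.1 \in D) w ++ [:: x] ++ filter (fun x0 : letter V => x0.1 \in lk adj D) w)).
    rewrite catA; apply: weq_catr.
    apply: comm_words => x' y; rewrite inE => /eqP -> .
    rewrite mem_filter => /andP[Hy _].
    move: HL; rewrite /lk inE => /forallP/(_ y.1); rewrite Hy /= adj_sym //.
transitivity (rho (st adj D) n); first exact: Hn.
rewrite (claim (rho (st adj D) n) (rho_all _ _)).
rewrite !rho_rho.
have -> : D :&: st adj D = D by apply/setP => v; rewrite !inE; case: (v \in D).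
rewrite (setIidPl (subsetUr _ _)).
reflexivity.
Qed.

Lemma lk_comm (D : {set V}) (a b : word) :
  in_special D a -> in_special (lk adj D) b -> weq (a ++ b) (b ++ a).
Proof.
rewrite !in_specialE => Ha Hb; rewrite Ha Hb.
apply: comm_words => x y; rewrite !mem_filter => /andP[Hx _] /andP[Hy _].
by move: Hy; rewrite /lk inE => /forallP/(_ x.1); rewrite Hx.
Qed.


Definition img (g : V -> word) (x : letter V) : word := if x.2 then winv (g x.1) else g x.1.

Lemma ext_cons g x (w : word) : ext g (x :: w) = img g x ++ ext g w.
Proof. by []. Qed.

Lemma ext_cat g (a b : word) : ext g (a ++ b) = ext g a ++ ext g b.
Proof. by rewrite /ext map_cat flatten_cat. Qed.

Lemma ext_letter g x : ext g [:: x] = img g x.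
Proof. by rewrite ext_cons cats0. Qed.

Lemma ext_winv g (a : word) : ext g (winv a) = winv (ext g a).
Proof.
elim: a => [|x a IH] //; rewrite winv_cons ext_cat IH ext_letter ext_cons winv_cat.
congr (_ ++ _); rewrite /img /=; case: x.2 => //=; by rewrite winvK.
Qed.

Lemma comm_inv (a b : word) : weq (a ++ b) (b ++ a) -> weq (winv a ++ b) (b ++ winv a).
Proof.
move=> H.
transitivity (winv a ++ (b ++ a) ++ winv a); first by rewrite -catA cancelR cats0; reflexivity.
by rewrite -H -!catA group_cancel_l; reflexivity.
Qed.

Lemma img_comm g x y : is_endo adj g -> adj x.1 y.1 -> weq (img g x ++ img g y) (img g y ++ img g x).
Proof.
move=> Hg Hxy; have H := Hg _ _ Hxy.
have H' : weq (g y.1 ++ g x.1) (g x.1 ++ g y.1) by symmetry.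
rewrite /img; case: x.2; case: y.2.
- have := winv_proper_2 H; rewrite !winv_cat => H2; by symmetry.
- exact: comm_inv H.
- by symmetry; apply: comm_inv.
- exact: H.
Qed.

Global Instance ext_proper' g : is_endo adj g -> Proper (weq ==> weq) (ext g).
Proof.
move=> Hg a b; elim=> {a b}.
- by move=> w; reflexivity.
- by move=> ? ? _ H; symmetry.
- by move=> ? ? ? _ H1 _ H2; etransitivity; eauto.
- move=> a b x; rewrite !ext_cat !ext_cons.
  have -> : img g (inv_letter x) = winv (img g x).
    by rewrite /img /=; case: x.2 => //=; rewrite winvK.
  by rewrite group_cancel_l'; reflexivity.
- move=> a b x y Hxy; rewrite !ext_cat !ext_cons; apply: weq_catl; rewrite !catA; apply: weq_catr; exact: img_comm.
Qed.

Lemma ext_weq g (a b : word) : is_endo adj g -> weq a b -> weq (ext g a) (ext g b).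
Proof. by move=> Hg; apply: ext_proper'. Qed.

Lemma ext_comp g h (w : word) : ext g (ext h w) = ext (fun v => ext g (h v)) w.
Proof.
elim: w => [|x w IH] //; rewrite ext_cons ext_cat IH ext_cons; congr (_ ++ _).
by rewrite /img; case: x.2 => //; rewrite ext_winv.
Qed.

Lemma ext_pointwise g1 g2 (w : word) : (forall v, weq (g1 v) (g2 v)) -> weq (ext g1 w) (ext g2 w).
Proof.
move=> H; elim: w => [|x w IH]; first reflexivity.
rewrite !ext_cons IH /img; case: x.2; rewrite (H x.1); reflexivity.
Qed.

Lemma ext_gen (w : word) : ext (@gen V) w = w.
Proof. by elim: w => [|[v b] w IH] //; rewrite ext_cons IH /img /=; case: b. Qed.


Ltac gs := rewrite ?winv_cat ?winvK -?catA; repeat (rewrite ?group_cancel_l ?group_cancel_l' ?cancelL ?cancelR ?cats0 -?catA).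

Definition fwd (X : {set V}) g (c : word) :=
  forall w, in_special X w -> in_special X (conjw c (ext g w)).

Lemma t_trick (Q : {set V}) (t : word) :
  (forall a, in_special Q a -> in_special Q (conjw t a)) ->
  forall v, in_special Q v -> in_special Q (t ++ v ++ winv t).
Proof.
move=> H v Hv.
set r := rho Q t.
have Hr : in_special Q r by exact: rho_special.
have key : forall a, in_special Q a -> weq (conjw t a) (winv r ++ a ++ r).
  move=> a Ha; have := H a Ha; rewrite in_specialE => E.
  rewrite E /conjw !rho_cat rho_winv.
  have Ha' := Ha; rewrite in_specialE in Ha'; rewrite -Ha'; reflexivity.
set a := r ++ v ++ winv r.
have Ha : in_special Q a by apply: in_special_cat => //; apply: in_special_cat => //; exact: (in_special_winv adj_sym).
have K := key a Ha.
have E : weq (t ++ v ++ winv t) a.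
  transitivity (t ++ (winv t ++ a ++ t) ++ winv t).
    apply: weq_catl; apply: weq_catr.
    rewrite /conjw in K; rewrite K /a; gs; reflexivity.
  gs; reflexivity.
by rewrite E.
Qed.

Section Pair.
Variables g h : V -> word.
Hypothesis Hg : is_endo adj g.
Hypothesis Hh : is_endo adj h.
Hypothesis Hgh : forall w, weq (ext g (ext h w)) w.
Hypothesis Hhg : forall w, weq (ext h (ext g w)) w.

Lemma inv_fwd (X : {set V}) : maps_to_conj adj g X -> exists c', fwd X h c'.
Proof.
case=> c [Hf Hb]; exists (winv (ext h c)) => w Hw.
case: (Hb w Hw) => w0 [Hw0 E].
rewrite /conjw winvK.
have H1 : weq (ext h c ++ ext h w ++ winv (ext h c)) (ext h (c ++ w ++ winv c)).
  by rewrite !ext_cat ext_winv; reflexivity.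
have H2 : weq (c ++ w ++ winv c) (ext g w0).
  rewrite -E /conjw; gs; reflexivity.
by rewrite H1 (ext_weq Hh H2) Hhg.
Qed.

Lemma incl_conj (Q : {set V}) : (exists e, fwd Q g e) -> (exists e', fwd Q h e') -> maps_to_conj adj g Q.
Proof.
case=> e He [e' He']; exists e; split => // v Hv.
set t := ext g e' ++ e.
have Ht : forall a, in_special Q a -> in_special Q (conjw t a).
  move=> a Ha; have := He _ (He' a Ha).
  have -> : weq (conjw e (ext g (conjw e' (ext h a)))) (conjw t a).
    rewrite /conjw !(ext_cat g) (ext_winv g) Hgh /t; gs; reflexivity.
  by [].
have Htv := t_trick Ht Hv.
exists (conjw e' (ext h (t ++ v ++ winv t))); split; first exact: He'.
rewrite /conjw !(ext_cat g) (ext_winv g) Hgh /t; gs; reflexivity.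
Qed.

End Pair.


Lemma incl_i g (D S : {set V}) c d : is_endo adj g -> fwd D g c -> fwd S g d ->
  fwd (D :&: S) g (c ++ rho D (winv c ++ d)).
Proof.
move=> Hg HD HS u Hu.
have HuD : in_special D u by apply: (in_special_sub (subsetIl D S)).
have HuS : in_special S u by apply: (in_special_sub (subsetIr D S)).
set q := conjw c (ext g u); have Hq : in_special D q by exact: HD.
set s := conjw d (ext g u); have Hs : in_special S s by exact: HS.
set x := winv c ++ d; set y := rho D x.
have E1 : weq q (x ++ s ++ winv x) by rewrite /q /s /x /conjw; gs; reflexivity.
have E2 : weq q (y ++ rho D s ++ winv y).
  have R : rho D (x ++ s ++ winv x) = y ++ rho D s ++ winv y.
    by rewrite rho_cat [rho D (s ++ _)]rho_cat rho_winv.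
  rewrite in_specialE in Hq; rewrite {1}Hq E1 R; reflexivity.
have E3 : weq (conjw (c ++ y) (ext g u)) (rho D s).
  transitivity (winv y ++ q ++ y); first by rewrite /q /conjw; gs; reflexivity.
  rewrite E2; gs; reflexivity.
rewrite E3; rewrite in_specialE in Hs; rewrite Hs rho_rho; exact: rho_special.
Qed.

Lemma retract_centralize (X P : {set V}) (x : word) : P \subset X ->
  (forall q, in_special P q -> in_special X (x ++ q ++ winv x)) ->
  forall q, in_special P q -> weq ((winv (rho X x) ++ x) ++ q) (q ++ (winv (rho X x) ++ x)).
Proof.
move=> sPX H q Hq.
set r := rho X x.
have HqX : in_special X q by exact: in_special_sub sPX Hq.
have E : weq (x ++ q ++ winv x) (r ++ q ++ winv r).
  have := H q Hq; rewrite in_specialE => ->.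
  have R : rho X (x ++ q ++ winv x) = r ++ rho X q ++ winv r.
    by rewrite rho_cat [rho X (q ++ _)]rho_cat rho_winv.
  rewrite R; rewrite in_specialE in HqX; rewrite -HqX; reflexivity.
transitivity ((winv r ++ (x ++ q ++ winv x) ++ r) ++ (winv r ++ x)).
  gs; reflexivity.
rewrite E; gs; reflexivity.
Qed.


Lemma fwd_union g (D S : {set V}) e : is_endo adj g ->
  (forall w, in_special D w -> in_special (D :|: S) (conjw e (ext g w))) ->
  (forall w, in_special S w -> in_special (D :|: S) (conjw e (ext g w))) ->
  fwd (D :|: S) g e.
Proof.
move=> Hg HD HS w Hw.
have key : forall w0 : word, all (fun x : letter V => x.1 \in D :|: S) w0 ->
    in_special (D :|: S) (conjw e (ext g w0)).
  elim=> [|x w0 IH] /=.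
  - by move=> _; rewrite /conjw /= cancelL; exact: in_special_nil.
  - move=> /andP[Hx Hw0].
    have -> : weq (conjw e (ext g (x :: w0))) (conjw e (ext g [:: x]) ++ conjw e (ext g w0)).
      by rewrite /conjw ext_cons ext_letter; gs; reflexivity.
    apply: in_special_cat; last exact: IH.
    move: Hx; rewrite inE => /orP[Hx|Hx].
    + by apply: HD; apply: in_special_letter.
    + by apply: HS; apply: in_special_letter.
rewrite in_specialE in Hw.
have -> : weq (conjw e (ext g w)) (conjw e (ext g (rho (D :|: S) w))).
  by rewrite /conjw (ext_weq Hg Hw); reflexivity.
apply: key; exact: rho_all.
Qed.

Lemma incl_ii g (D S : {set V}) c d a : is_endo adj g ->
  lk adj (D :&: S) \subset st adj D ->
  fwd D g c -> fwd S g d ->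
  (forall q, in_special (D :&: S) q -> exists p, in_special (D :&: S) p /\ weq (conjw a (ext g p)) q) ->
  exists e, fwd (D :|: S) g e.
Proof.
move=> Hg Hlk HD HS Hb.
have sPD := subsetIl D S; have sPS := subsetIr D S.
set x := winv c ++ a; set y := winv d ++ a.
have Hx : forall q, in_special (D :&: S) q -> in_special D (x ++ q ++ winv x).
  move=> q Hq; case: (Hb q Hq) => p [Hp E].
  have -> : weq (x ++ q ++ winv x) (conjw c (ext g p)) by rewrite -E /x /conjw; gs; reflexivity.
  by apply: HD; apply: (in_special_sub sPD).
have Hy : forall q, in_special (D :&: S) q -> in_special S (y ++ q ++ winv y).
  move=> q Hq; case: (Hb q Hq) => p [Hp E].
  have -> : weq (y ++ q ++ winv y) (conjw d (ext g p)) by rewrite -E /y /conjw; gs; reflexivity.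
  by apply: HS; apply: (in_special_sub sPS).
have C1 := retract_centralize sPD Hx.
have C2 := retract_centralize sPS Hy.
set m1 := winv (rho D x) ++ x; set m2 := winv (rho S y) ++ y.
set n := m1 ++ winv m2.
have Cn : forall q, in_special (D :&: S) q -> weq (n ++ q) (q ++ n).
  move=> q Hq; rewrite /n -catA (comm_inv (C2 q Hq)) catA (C1 q Hq) -catA; reflexivity.
have Hn : in_special (st adj (D :&: S)) n.
  apply: cent_st => p Hp; apply: Cn; exact: in_special_letter.
have HnD : in_special (st adj D) n.
  apply: (in_special_sub _ Hn); rewrite /st subUset Hlk andbT.
  by apply: subset_trans sPD (subsetUl _ _).
set nD := rho D n; set nL := rho (lk adj D) n.
have En : weq n (nD ++ nL) by exact: st_split.
have HnD' : in_special D nD by exact: rho_special.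
have HnL : in_special (lk adj D) nL by exact: rho_special.
set rx := rho D x; set ry := rho S y.
exists ((c ++ rx) ++ nD ++ nL).
apply: fwd_union => // w Hw.
- set z0 := conjw c (ext g w).
  have Hz0 : in_special D z0 by exact: HD.
  set z := winv nD ++ winv rx ++ z0 ++ rx ++ nD.
  have Hz : in_special D z.
    apply: in_special_cat; first exact: (in_special_winv adj_sym).
    apply: in_special_cat; first by apply: (in_special_winv adj_sym); rewrite /rx; exact: rho_special.
    apply: in_special_cat => //; apply: in_special_cat => //; rewrite /rx; exact: rho_special.
  have -> : weq (conjw ((c ++ rx) ++ nD ++ nL) (ext g w)) z.
    transitivity (winv nL ++ z ++ nL); first by rewrite /z /z0 /conjw; gs; reflexivity.
    rewrite (lk_comm Hz HnL); gs; reflexivity.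
  apply: (in_special_sub _ Hz); exact: subsetUl.
- set s' := conjw d (ext g w).
  have Hs' : in_special S s' by exact: HS.
  set s'' := winv ry ++ s' ++ ry.
  have Hs'' : in_special S s''.
    apply: in_special_cat; first by apply: (in_special_winv adj_sym); rewrite /ry; exact: rho_special.
    apply: in_special_cat => //; rewrite /ry; exact: rho_special.
  have Cl : weq (conjw (c ++ rx) (ext g w)) (n ++ s'' ++ winv n).
    rewrite /n /m1 /m2 /s'' /s' /x /y /conjw; gs; reflexivity.
  clearbody n s''.
  have -> : weq (conjw ((c ++ rx) ++ nD ++ nL) (ext g w)) s''.
    transitivity (winv (nD ++ nL) ++ conjw (c ++ rx) (ext g w) ++ (nD ++ nL)).
      rewrite /conjw; gs; reflexivity.
    rewrite Cl -En; gs; reflexivity.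
  apply: (in_special_sub _ Hs''); exact: subsetUr.
Qed.


Lemma auto_inv g : is_auto adj g -> is_endo adj g /\ exists h, is_endo adj h /\
  (forall w, weq (ext g (ext h w)) w) /\ (forall w, weq (ext h (ext g w)) w).
Proof.
case=> Hg [h [Hh Hv]]; split => //; exists h; split => //; split => w.
- rewrite ext_comp; rewrite -{2}(ext_gen w); apply: ext_pointwise => v; exact: (Hv v).1.
- rewrite ext_comp; rewrite -{2}(ext_gen w); apply: ext_pointwise => v; exact: (Hv v).2.
Qed.

Lemma part_i g h (D S : {set V}) c d c' d' :
  is_endo adj g -> is_endo adj h ->
  (forall w, weq (ext g (ext h w)) w) -> (forall w, weq (ext h (ext g w)) w) ->
  fwd D g c -> fwd S g d -> fwd D h c' -> fwd S h d' -> maps_to_conj adj g (D :&: S).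
Proof.
move=> Hg Hh Hgh Hhg H1 H2 H3 H4.
apply: (incl_conj (h := h)) => //.
- by exists (c ++ rho D (winv c ++ d)); apply: incl_i.
- by exists (c' ++ rho D (winv c' ++ d')); apply: incl_i.
Qed.

Lemma full g (D S : {set V}) :
  is_auto adj g -> maps_to_conj adj g D -> maps_to_conj adj g S ->
  maps_to_conj adj g (D :&: S) /\
  (lk adj (D :&: S) \subset st adj D -> maps_to_conj adj g (D :|: S)).
Proof.
move=> /auto_inv [Hg [h [Hh [Hgh Hhg]]]] HD HS.
have [c' Hc'] := inv_fwd Hh Hhg HD.
have [d' Hd'] := inv_fwd Hh Hhg HS.
case: HD => c [Hc _]; case: HS => d [Hd _].
have Pg : maps_to_conj adj g (D :&: S) by apply: (part_i (h := h)); eauto.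
have Ph : maps_to_conj adj h (D :&: S) by apply: (part_i (h := g)); eauto.
split => // Hlk.
apply: (incl_conj (h := h)) => //.
- case: Pg => a [_ Hb]; exact: (incl_ii Hg Hlk Hc Hd Hb).
- case: Ph => a [_ Hb]; exact: (incl_ii Hh Hlk Hc' Hd' Hb).
Qed.

End Main.

Theorem mainTheorem6 (V : finType) (adj : rel V)
  (adj_sym : symmetric adj) (adj_irr : irreflexive adj)
  (H : Type) (mulH : H -> H -> H) (oneH : H) (invH : H -> H)
  (Hgrp : is_group mulH oneH invH)
  (phi : H -> V -> word V) (Hphi : is_out_hom adj mulH phi)
  (D S : {set V}) :
  invariant_sub adj phi D -> invariant_sub adj phi S ->
  invariant_sub adj phi (D :&: S) /\
  (lk adj (D :&: S) \subset st adj D -> invariant_sub adj phi (D :|: S)).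
Proof.
move=> HD HS.
have K : forall h0, maps_to_conj adj (phi h0) (D :&: S) /\
  (lk adj (D :&: S) \subset st adj D -> maps_to_conj adj (phi h0) (D :|: S)).
  move=> h0; apply: full => //; exact: (proj1 Hphi h0).
split; first by move=> h0; exact: (K h0).1.
by move=> Hlk h0; exact: (K h0).2 Hlk.
Qed.
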